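(* There exists a dichotomous hedonic game such that no finite sequence of IS deviations starting from the singleton partition ends in an individually stable partition.
   Context: A dichotomous hedonic game (DHG) on agents $N$ gives each agent $i$ a function $v_i$ from the coalitions containing $i$ to $\{0,1\}$ (approve/disapprove), and $i$ weakly prefers $C$ to $C'$ iff $v_i(C)\ge v_i(C')$. The singleton partition is $\{\{i\}:i\in N\}$. An IS deviation of agent $i$ from partition $\pi$ to $\pi'$ is a move of $i$ alone from $\pi(i)$ into another coalition of $\pi$ or into a new singleton such that $i$ strictly prefers $\pi'(i)$ to $\pi(i)$ and every $j\in\pi'(i)\setminus\{i\}$ weakly prefers $\pi'(j)$ to $\pi(j)$. A partition is individually stable (IS) if no IS deviation is possible from it. *)

(* Defs.v *)
From mathcomp Require Import all_boot.
Set Implicit Arguments. Unset Strict Implicit. Unset Printing Implicit Defensive.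

(* A dichotomous hedonic game on the finite agent set T: v i C is agent i's
   approval (true = 1, false = 0) of coalition C; only its values on
   coalitions C containing i are meaningful. *)
Definition dhg (T : finType) := T -> {set T} -> bool.

Definition singleton_partition (T : finType) : {set {set T}} :=
  [set [set x] | x : T].

(* The partition obtained from P when agent i leaves its coalition pblock P i
   and joins the coalition C (C = set0 means: i forms a new singleton).
   Empty blocks are discarded. *)
Definition move (T : finType) (P : {set {set T}}) (i : T) (C : {set T})
  : {set {set T}} :=
  ((P :\ pblock P i :\ C) :|: [set pblock P i :\ i; C :|: [set i]]) :\ set0.

(* An IS deviation of agent i from P to P': i moves alone into another
   coalition C of P or into a new singleton (C = set0); i strictly prefers
   the new coalition, and every j in pi'(i) \ {i} = C weakly prefers
   pi'(j) = C :|: {i} to pi(j) = C. *)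
Definition IS_deviation (T : finType) (v : dhg T) (P P' : {set {set T}}) : Prop :=
  exists (i : T) (C : {set T}),
    ((C \in P /\ C != pblock P i) \/ C = set0) /\
    P' = move P i C /\
    (v i (C :|: [set i]) && ~~ v i (pblock P i)) /\
    (forall j, j \in C -> (v j C ==> v j (C :|: [set i]))).

Definition individually_stable (T : finType) (v : dhg T) (P : {set {set T}}) : Prop :=
  ~ exists P', IS_deviation v P P'.

Fixpoint IS_sequence (T : finType) (v : dhg T) (P : {set {set T}})
    (s : seq {set {set T}}) : Prop :=
  match s with
  | [::] => True
  | Q :: s' => IS_deviation v P Q /\ IS_sequence v Q s'
  end.

(* Main.v *)
Require Import Defs.
From mathcomp Require Import all_boot.

Definition a0 : 'I_3 := @Ordinal 3 0 isT.
Definition a1 : 'I_3 := @Ordinal 3 1 isT.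
Definition a2 : 'I_3 := @Ordinal 3 2 isT.

Lemma enum3 (i : 'I_3) : [\/ i = a0, i = a1 | i = a2].
Proof.
case: i => [[|[|[|//]]] Hi].
- by apply: Or31; apply: val_inj.
- by apply: Or32; apply: val_inj.
- by apply: Or33; apply: val_inj.
Qed.

Lemma eqset3 (A B : {set 'I_3}) :
  (A == B) = [&& (a0 \in A) == (a0 \in B), (a1 \in A) == (a1 \in B) &
                 (a2 \in A) == (a2 \in B)].
Proof.
apply/idP/idP => [/eqP->|/and3P[/eqP h0 /eqP h1 /eqP h2]]; first by rewrite !eqxx.
by apply/eqP/setP => x; case: (enum3 x) => ->.
Qed.

Definition v : dhg 'I_3 := fun i C =>
  if i == a0 then C == [set a0; a2]
  else if i == a1 then C == [set a0; a1]
  else C == [set a1; a2].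

Lemma pblockE (P : {set {set 'I_3}}) i X :
  (forall B, (B \in P) && (i \in B) = (B == X)) -> pblock P i = X.
Proof.
move=> H; rewrite /pblock; case: pickP => [B /= HB | H0] /=.
  by apply/eqP; rewrite -H.
by have := H0 X; rewrite /= H eqxx.
Qed.

Ltac dec := rewrite ?inE ?eqset3 ?inE /=;
  try (case: (a0 \in _)); try (case: (a1 \in _)); try (case: (a2 \in _)); by [].
Definition S0 : {set {set 'I_3}} := [set [set a0]; [set a1]; [set a2]].
Definition S1 : {set {set 'I_3}} := [set [set a0; a2]; [set a1]].
Definition S2 : {set {set 'I_3}} := [set [set a0; a1]; [set a2]].
Definition S3 : {set {set 'I_3}} := [set [set a1; a2]; [set a0]].

Definition Inv P := [\/ P = S0, P = S1, P = S2 | P = S3].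

Lemma singE : singleton_partition 'I_3 = S0.
Proof.
apply/setP => B; rewrite /singleton_partition /S0 !inE.
apply/imsetP/idP => [[x _ ->]|].
  by case: (enum3 x) => ->; rewrite !eqxx ?orbT.
by case/orP; [case/orP|]; move/eqP->; eexists.
Qed.

Ltac pb := apply: pblockE => B; dec.

Lemma p00 : pblock S0 a0 = [set a0]. Proof. pb. Qed.
Lemma p01 : pblock S0 a1 = [set a1]. Proof. pb. Qed.
Lemma p02 : pblock S0 a2 = [set a2]. Proof. pb. Qed.
Lemma p10 : pblock S1 a0 = [set a0; a2]. Proof. pb. Qed.
Lemma p11 : pblock S1 a1 = [set a1]. Proof. pb. Qed.
Lemma p12 : pblock S1 a2 = [set a0; a2]. Proof. pb. Qed.
Lemma p20 : pblock S2 a0 = [set a0; a1]. Proof. pb. Qed.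
Lemma p21 : pblock S2 a1 = [set a0; a1]. Proof. pb. Qed.
Lemma p22 : pblock S2 a2 = [set a2]. Proof. pb. Qed.
Lemma p30 : pblock S3 a0 = [set a0]. Proof. pb. Qed.
Lemma p31 : pblock S3 a1 = [set a1; a2]. Proof. pb. Qed.
Lemma p32 : pblock S3 a2 = [set a1; a2]. Proof. pb. Qed.

Ltac inv_dec :=
  solve [apply: Or41; apply/setP => B; dec
        |apply: Or42; apply/setP => B; dec
        |apply: Or43; apply/setP => B; dec
        |apply: Or44; apply/setP => B; dec].

Lemma step P Q : Inv P -> IS_deviation v P Q -> Inv Q.
Proof.
case=> ->; case=> i [C [HC [-> [Hv _]]]];
case: (enum3 i) HC Hv => -> ; rewrite /move /v ?p00 ?p01 ?p02 ?p10 ?p11 ?p12 ?p20 ?p21 ?p22 ?p30 ?p31 ?p32 /=;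
(case=> [[H1 _]|->]; [move: H1; rewrite !inE; repeat case/orP; move/eqP-> | ]);
  rewrite ?eqset3 ?inE /=; try done; intros; inv_dec.
Qed.

Lemma dev_ex P : Inv P -> ~ individually_stable v P.
Proof.
move=> HP; apply; case: HP => ->;
  [ exists (move S0 a0 [set a2]); exists a0, [set a2]
  | exists (move S1 a2 [set a1]); exists a2, [set a1]
  | exists (move S2 a0 [set a2]); exists a0, [set a2]
  | exists (move S3 a1 [set a0]); exists a1, [set a0] ];
  rewrite /v ?p00 ?p01 ?p02 ?p10 ?p11 ?p12 ?p20 ?p21 ?p22 ?p30 ?p31 ?p32 /=;
  (split; [left; split; dec | split; [done | split; [dec | move=> j; case: (enum3 j) => ->; dec]]]).
Qed.

Lemma main_gen s : forall P, Inv P -> IS_sequence v P s -> ~ individually_stable v (last P s).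
Proof.
elim: s => [|Q s IH] P HP /=; first by move=> _; exact: dev_ex.
move=> [HD Hs].
exact: IH Q (step P Q HP HD) Hs.
Qed.

Theorem proposition6p1 :
  exists (T : finType) (v : dhg T),
    forall s : seq {set {set T}},
      IS_sequence v (singleton_partition T) s ->
      ~ individually_stable v (last (singleton_partition T) s).
Proof.
exists 'I_3, v => s; rewrite singE; apply: main_gen; exact: Or41.
Qed.
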